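(* Let $\mathcal{M}=(N,\mathcal{I})$ be a matroid, $f:2^N\to\mathbb{R}$ a normalized submodular function, $\varepsilon\in(0,1)$, $\beta\ge0$. Let $I_1,\dots,I_k,S_1,\dots,S_k$ be random subsets of $N$; write $U_i=S_1\cup\dots\cup S_i$ and $V_i=I_1\cup\dots\cup I_i$ ($U_0=V_0=\emptyset$). Suppose: (a) for each $i$, almost surely $I_i\subseteq S_i\subseteq N\setminus\mathrm{span}(U_{i-1})$, $I_i$ is independent in $\mathcal{M}/U_{i-1}$, and, conditioned on $(I_j,S_j)_{j<i}$, $\mathbb{E}[f_{U_{i-1}}(I_i)]\ge(1-\varepsilon)\,\mathbb{E}[|S_i|]\cdot\max\{0,\max_{e\in N\setminus\mathrm{span}(U_{i-1})}f_{U_{i-1}}(e)\}$; (b) almost surely $f_{U_k}(T\setminus\mathrm{span}(U_k))\le\beta$ for all $T\in\mathcal{I}$. Then (i) $\mathbb{E}[f(V_k)]\ge(1-\varepsilon)\mathbb{E}[f(U_k)]$; and (ii) for every fixed $T\in\mathcal{I}$ there is a partition $T=T_1\cup\dots\cup T_{k+1}$, with each $T_i$ a deterministic function of $S_1,\dots,S_k$, such that $T_i\cap\mathrm{span}(U_{i-1})=\emptyset$ for each $i$, and $\mathbb{E}[f(V_k)]\ge(1-\varepsilon)\sum_{i=1}^{k+1}\mathbb{E}[f_{U_{i-1}}(T_i)]-(1-\varepsilon)\beta$.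
   Context: $f$ normalized: $f(\emptyset)=0$; submodular: $f(A)+f(B)\ge f(A\cup B)+f(A\cap B)$. $f_U(A)=f(U\cup A)-f(U)$. $\mathrm{span}(S)=\{e:\mathrm{rank}(S\cup\{e\})=\mathrm{rank}(S)\}$. The contraction $\mathcal{M}/U$ has ground set $N\setminus\mathrm{span}(U)$, and $A$ is independent in it iff $\mathrm{rank}(A\cup U)-\mathrm{rank}(U)=|A|$. *)

(* Defs.v *)
From HB Require Import structures.
From mathcomp Require Import all_boot all_order all_algebra.
Set Implicit Arguments. Unset Strict Implicit. Unset Printing Implicit Defensive.
Import Order.TTheory GRing.Theory Num.Theory.

Record matroid (T : finType) := Matroid {
  indep : {set T} -> bool;
  indep0 : indep set0;
  indep_sub : forall A B : {set T}, A \subset B -> indep B -> indep A;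
  indep_aug : forall A B : {set T}, indep A -> indep B -> #|A| < #|B| ->
    exists2 e, e \in B :\: A & indep (e |: A)
}.

Section MatroidDefs.
Variables (T : finType) (M : matroid T).

Definition mrank (S : {set T}) : nat :=
  \max_(A : {set T} | (A \subset S) && indep M A) #|A|.

Definition mspan (S : {set T}) : {set T} :=
  [set e | mrank (e |: S) == mrank S].

(* A is independent in the contraction M/U *)
Definition indep_contr (U A : {set T}) : bool :=
  (A \subset ~: mspan U) && (mrank (A :|: U) - mrank U == #|A|).
End MatroidDefs.

Section SetFunDefs.
Variables (T : finType) (R : realFieldType).
Local Open Scope ring_scope.

Definition normalized (f : {set T} -> R) : Prop := f set0 = 0.
Definition submodular (f : {set T} -> R) : Prop :=
  forall A B : {set T}, f (A :|: B) + f (A :&: B) <= f A + f B.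

Definition marg (f : {set T} -> R) (U A : {set T}) : R := f (U :|: A) - f U.
End SetFunDefs.

(* Finite probability space: weights p on a finite sample space Omega.
   (All random objects here take values in a finite set, so this is
   no loss of generality.) *)
Section Prob.
Variables (Omega : finType) (R : realFieldType).
Local Open Scope ring_scope.

Definition is_prob (p : Omega -> R) : Prop :=
  (forall w, 0 <= p w) /\ \sum_w p w = 1.

Definition Exp (p : Omega -> R) (X : Omega -> R) : R := \sum_w p w * X w.

Definition condExp (p : Omega -> R) (E : pred Omega) (X : Omega -> R) : R :=
  (\sum_(w | E w) p w * X w) / (\sum_(w | E w) p w).
End Prob.

Section Process.
Variables (T Omega : finType).
(* Paper's S_{j+1}, I_{j+1} are  S j, I j  (0-based). *)
Definition Uset (S : nat -> Omega -> {set T}) (i : nat) (w : Omega) : {set T} :=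
  \bigcup_(j < i) S j w.

Definition same_hist (I S : nat -> Omega -> {set T}) (i : nat) (w w' : Omega) : bool :=
  [forall j : 'I_i, (I j w == I j w') && (S j w == S j w')].
End Process.

Definition maxgain (T : finType) (R : realFieldType) (M : matroid T)
  (f : {set T} -> R) (U : {set T}) : R :=
  \big[Num.max/0%R]_(e | e \notin mspan M U) marg f U [set e].

(* Main.v *)
Require Import Defs.
From HB Require Import structures.
From mathcomp Require Import all_boot all_order all_algebra.
From mathcomp Require Import lra ring.
Import Order.TTheory GRing.Theory Num.Theory.
Set Implicit Arguments. Unset Strict Implicit. Unset Printing Implicit Defensive.


Lemma mrank_ge (T : finType) (M : matroid T) (A S : {set T}) :
  A \subset S -> indep M A -> #|A| <= mrank M S.
Proof. move=> h1 h2; rewrite /mrank.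
exact: (@leq_bigmax_cond _ (fun B : {set T} => (B \subset S) && indep M B) (fun B : {set T} => #|B|) A (introT andP (conj h1 h2))). Qed.

Lemma mrank_wit (T : finType) (M : matroid T) (S : {set T}) :
  exists B : {set T}, [/\ B \subset S, indep M B & #|B| = mrank M S].
Proof.
rewrite /mrank.
have P0 : (set0 \subset S) && indep M set0 by rewrite sub0set indep0.
rewrite (@bigop.bigmax_eq_arg _ set0 (fun B : {set T} => (B \subset S) && indep M B) (fun B : {set T} => #|B|) P0).
case: arg_maxnP => // B /andP[h1 h2] _; by exists B.
Qed.

Lemma mrank0 (T : finType) (M : matroid T) : mrank M set0 = 0.
Proof.
have [B [h1 _ <-]] := mrank_wit M set0.
by move: h1; rewrite subset0 => /eqP ->; rewrite cards0.
Qed.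

Lemma mrank_le_card (T : finType) (M : matroid T) (S : {set T}) : mrank M S <= #|S|.
Proof. have [B [h1 _ <-]] := mrank_wit M S. exact: subset_leq_card. Qed.

Lemma mrank_mono (T : finType) (M : matroid T) (A B : {set T}) :
  A \subset B -> mrank M A <= mrank M B.
Proof.
move=> AB; have [C [h1 h2 <-]] := mrank_wit M A.
by apply: mrank_ge => //; apply: subset_trans AB.
Qed.

Lemma sub_mspan (T : finType) (M : matroid T) (U : {set T}) : U \subset mspan M U.
Proof.
apply/subsetP=> e eU; rewrite inE.
by rewrite (setUidPr _) ?sub1set.
Qed.

Lemma indep_not_loop (T : finType) (M : matroid T) (Tt : {set T}) e :
  indep M Tt -> e \in Tt -> e \notin mspan M set0.
Proof.
move=> iT eT; rewrite inE mrank0 setU0.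
have h : #|[set e]| <= mrank M [set e].
  apply: mrank_ge => //; apply: indep_sub iT; by rewrite sub1set.
by move: h; rewrite cards1; case: (mrank M [set e]).
Qed.

Lemma count_span (T : finType) (M : matroid T) (Tt U : {set T}) :
  indep M Tt -> #|Tt :&: mspan M U| <= mrank M U.
Proof.
move=> iT; set X := Tt :&: mspan M U.
have iX : indep M X by apply: indep_sub iT; exact: subsetIl.
have [B [h1 h2 h3]] := mrank_wit M U.
rewrite leqNgt -h3; apply/negP => lt.
have [x /setDP[xX xB] ixB] := indep_aug h2 iX lt.
have : x \in mspan M U by move: xX; rewrite inE => /andP[].
rewrite inE => /eqP E.
have : #|x |: B| <= mrank M (x |: U).
  apply: mrank_ge => //; exact: setUS.
by rewrite E cardsU1 xB -h3 ltnn.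
Qed.

Lemma aug_iter (T : finType) (M : matroid T) (n : nat) (D C : {set T}) :
  indep M D -> indep M C -> #|D| + n = #|C| ->
  exists D' : {set T}, [/\ D \subset D', D' \subset D :|: C, indep M D' & #|D'| = #|C|].
Proof.
elim: n D => [|n IH] D iD iC hc.
  by exists D; rewrite subxx subsetUl iD -hc addn0.
have lt : #|D| < #|C| by rewrite -hc addnS ltnS leq_addr.
have [x /setDP[xC xD] ixD] := indep_aug iD iC lt.
have hc' : #|x |: D| + n = #|C| by rewrite cardsU1 xD -hc addnS addSn.
have [D' [h1 h2 h3 h4]] := IH (x |: D) ixD iC hc'.
exists D'; split => //.
  by apply: subset_trans h1; exact: subsetUr.
apply: (subset_trans h2); rewrite -setUA subUset subxx andbT sub1set.
by rewrite !inE xC orbT.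
Qed.

Lemma mspan_mono (T : finType) (M : matroid T) (A B : {set T}) :
  A \subset B -> mspan M A \subset mspan M B.
Proof.
move=> AB; apply/subsetP => x; rewrite !inE => /eqP hA.
case xB: (x \in B); first by rewrite (setUidPr _) ?sub1set.
rewrite eqn_leq [X in _ && X]mrank_mono ?subsetUr // andbT leqNgt; apply/negP => lt.
have [C [c1 c2 c3]] := mrank_wit M (x |: B).
have [D [d1 d2 d3]] := mrank_wit M A.
have DB : mrank M A <= mrank M B by apply: mrank_mono.
have hle : #|D| <= #|C| by rewrite c3 d3; apply: leq_trans DB (ltnW lt).
have [D' [e1 e2 e3 e4]] := aug_iter d2 c2 (subnKC hle).
have xD' : x \in D'.
  apply/negPn/negP => nx.
  have : #|D'| <= mrank M B.
    apply: mrank_ge => //; apply/subsetP => y yD.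
    have : y \in D :|: C by apply: (subsetP e2).
    rewrite inE => /orP[yD0|yC].
      by apply: (subsetP AB); apply: (subsetP d1).
    move: (subsetP c1 y yC); rewrite !inE => /orP[/eqP ey|//].
    by move: nx; rewrite -ey yD.
  by rewrite e4 c3 leqNgt lt.
have xnD : x \notin D by apply/negP => xD; move: xB; rewrite (subsetP AB) // (subsetP d1).
have : #|x |: D| <= mrank M (x |: A).
  apply: mrank_ge; first exact: setUS.
  apply: indep_sub e3; by rewrite subUset sub1set xD' e1.
by rewrite hA cardsU1 xnD -d3 ltnn.
Qed.

Local Open Scope ring_scope.


Lemma bigmax0_ge0 (R : realFieldType) (I : finType) (P : pred I) (F : I -> R) :
  0 <= \big[Num.max/0]_(i | P i) F i.
Proof. apply: (big_rec (fun x => 0 <= x)) => // i x _ hx; by rewrite le_max hx orbT. Qed.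

Lemma bigmax0_le (R : realFieldType) (I : finType) (P : pred I) (F : I -> R) c :
  0 <= c -> (forall i, P i -> F i <= c) -> \big[Num.max/0]_(i | P i) F i <= c.
Proof. move=> c0 h; apply: (big_rec (fun x => x <= c)) => // i x Pi hx; by rewrite ge_max hx h. Qed.

Lemma bigmax0_ge (R : realFieldType) (I : finType) (P : pred I) (F : I -> R) i0 :
  P i0 -> F i0 <= \big[Num.max/0]_(i | P i) F i.
Proof.
move=> Pi0; rewrite /index_enum; have : i0 \in Finite.enum I by rewrite -enumT mem_enum.
elim: (Finite.enum I) => // a s IH; rewrite inE big_cons => /orP[/eqP <-|ins].
  by rewrite Pi0 le_max lexx.
case: (P a); last exact: IH.
by rewrite le_max IH ?orbT.
Qed.

Lemma marg_dimin (R : realFieldType) (T : finType) (f : {set T} -> R) (A B X : {set T}) :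
  submodular f -> A \subset B -> [disjoint X & B] -> marg f B X <= marg f A X.
Proof.
move=> sf AB dXB; rewrite /marg.
have h := sf (A :|: X) B.
have e1 : (A :|: X) :|: B = B :|: X by rewrite setUAC (setUidPr AB).
have e2 : (A :|: X) :&: B = A.
  rewrite setIUl (setIidPl AB).
  by move: dXB; rewrite -setI_eq0 => /eqP ->; rewrite setU0.
rewrite e1 e2 in h; lra.
Qed.

Lemma marg_U1 (R : realFieldType) (T : finType) (f : {set T} -> R) (U Y : {set T}) x :
  submodular f -> x \notin Y -> marg f U (x |: Y) <= marg f U Y + marg f U [set x].
Proof.
move=> sf xY; rewrite /marg.
have h := sf (U :|: Y) (U :|: [set x]).
have e1 : (U :|: Y) :|: (U :|: [set x]) = U :|: (x |: Y).
  by apply/setP => z; rewrite !inE; case: (z \in U); case: (z == x); case: (z \in Y).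
have e2 : (U :|: Y) :&: (U :|: [set x]) = U.
  apply/setP => z; rewrite !inE; case: (z \in U) => //=.
  by case: eqP => [ezx|]; rewrite ?andbF // ezx (negbTE xY).
rewrite e1 e2 in h; lra.
Qed.

Lemma marg_bound (R : realFieldType) (T : finType) (M : matroid T) (f : {set T} -> R)
  (U X : {set T}) :
  submodular f -> [disjoint X & mspan M U] -> marg f U X <= #|X|%:R * maxgain M f U.
Proof.
move=> sf; move: {2}#|X| (erefl #|X|) => n; elim: n X => [|n IH] X hX dX.
  move: hX => /eqP; rewrite cards_eq0 => /eqP ->.
  by rewrite /marg setU0 subrr cards0 mul0r.
have : (0 < #|X|)%N by rewrite hX.
rewrite card_gt0 => /set0Pn [x xX].
have E : X = x |: (X :\ x) by rewrite setD1K.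
have xY : x \notin X :\ x by rewrite !inE eqxx.
have dY : [disjoint X :\ x & mspan M U].
  apply: disjointWl dX; exact: subsetDl.
have cY : #|X :\ x| = n by move: hX; rewrite (cardsD1 x X) xX add1n => -[].
move: (X :\ x) E xY dY cY => Y -> xY dY cY.
apply: le_trans (marg_U1 U sf xY) _.
rewrite cardsU1 xY cY natrD mulrDl [marg f U Y + _]addrC /=; apply: lerD; last first.
  by rewrite -cY; apply: IH.
rewrite mul1r.
apply: (@bigmax0_ge _ _ (fun e => e \notin mspan M U) (fun e => marg f U [set e]) x).
by move: dX; rewrite disjoints_subset => /subsetP /(_ x xX); rewrite inE.
Qed.

Lemma maxgain_ge0 (R : realFieldType) (T : finType) (M : matroid T) (f : {set T} -> R) U :
  0 <= maxgain M f U.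
Proof. exact: bigmax0_ge0. Qed.

Lemma maxgain_mono (R : realFieldType) (T : finType) (M : matroid T) (f : {set T} -> R)
  (U V : {set T}) : submodular f -> U \subset V -> maxgain M f V <= maxgain M f U.
Proof.
move=> sf UV; apply: bigmax0_le; first exact: maxgain_ge0.
move=> e eV.
have dis : [disjoint [set e] & V].
  rewrite disjoint_sym disjoints_subset; apply: subset_trans (sub_mspan M V) _.
  by apply/subsetP => z zs; rewrite !inE; apply/negP => /eqP ez; move: eV; rewrite -ez zs.
apply: le_trans (marg_dimin sf UV dis) _.
apply: (@bigmax0_ge _ _ (fun e => e \notin mspan M U) (fun e => marg f U [set e]) e); apply/negP => eU; move: eV; by rewrite (subsetP (mspan_mono M UV)).
Qed.

Local Close Scope ring_scope.

Local Open Scope ring_scope.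


Lemma Exp_le (R : realFieldType) (Omega : finType) (p : Omega -> R) (X Y : Omega -> R) :
  (forall w, 0 <= p w) -> (forall w, 0 < p w -> X w <= Y w) -> Exp p X <= Exp p Y.
Proof.
move=> p0 h; rewrite /Exp; apply: ler_sum => w _.
have := p0 w; rewrite le0r => /orP[/eqP ->|pw]; first by rewrite !mul0r.
by rewrite ler_pM2l // h.
Qed.

Lemma Exp_sum (R : realFieldType) (Omega : finType) (p : Omega -> R) n (g : nat -> Omega -> R) :
  Exp p (fun w => \sum_(i < n) g i w) = \sum_(i < n) Exp p (g i).
Proof.
rewrite /Exp; under eq_bigr do rewrite mulr_sumr.
exact: exchange_big.
Qed.

Lemma Exp_add (R : realFieldType) (Omega : finType) (p : Omega -> R) (X Y : Omega -> R) :
  Exp p (fun w => X w + Y w) = Exp p X + Exp p Y.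
Proof. rewrite /Exp -big_split /=; apply: eq_bigr => w _; by rewrite mulrDr. Qed.

Lemma Exp_const (R : realFieldType) (Omega : finType) (p : Omega -> R) c :
  is_prob p -> Exp p (fun _ => c) = c.
Proof. move=> [_ h]; by rewrite /Exp -mulr_suml h mul1r. Qed.

Lemma tower (R : realFieldType) (Omega : finType) (p : Omega -> R) (C : Omega -> Omega -> bool)
  (X : Omega -> R) :
  (forall w, 0 <= p w) -> (forall w, C w w) -> (forall w w', C w w' -> C w' w) ->
  (forall w1 w2 w3, C w1 w2 -> C w2 w3 -> C w1 w3) ->
  \sum_w p w * condExp p (C w) X = \sum_w p w * X w.
Proof.
move=> p0 Cr Cs Ct.
set P := fun w => \sum_(w' | C w w') p w'.
have PE : forall w w', C w w' -> P w = P w'.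
  move=> w w' c; apply: eq_bigl => z; apply/idP/idP => h.
    exact: Ct (Cs _ _ c) h.
  exact: Ct c h.
rewrite /condExp.
transitivity (\sum_w \sum_w' (if C w w' then p w * (p w' * X w') / P w else 0)).
  apply: eq_bigr => w _; rewrite big_mkcond mulr_suml mulr_sumr; apply: eq_bigr => w' _.
  by case: (C w w') => /=; [rewrite /P !mulrA | rewrite mul0r mulr0].
rewrite exchange_big /=; apply: eq_bigr => w' _.
transitivity (\sum_(w | C w' w) p w * (p w' * X w') / P w').
  rewrite [RHS]big_mkcond; apply: eq_bigr => w _.
  case cw: (C w w'); first by rewrite (Cs _ _ cw) (PE _ _ cw).
  by case cw': (C w' w) => //; move: cw; rewrite (Cs _ _ cw').
rewrite -mulr_suml -mulr_suml -/(P w').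
have := p0 w'; rewrite le0r => /orP[/eqP ->|pw]; first by rewrite !mul0r mulr0 mul0r.
have Pp : 0 < P w'.
  apply: lt_le_trans pw _; rewrite /P (bigD1 w') //=; rewrite lerDl.
  by apply: sumr_ge0 => i _.
by rewrite mulrAC divff ?mul1r // gt_eqF.
Qed.

Local Close Scope ring_scope.


Lemma Uset0 (T Omega : finType) (S : nat -> Omega -> {set T}) w : Uset S 0 w = set0.
Proof. by rewrite /Uset big_ord0. Qed.

Lemma UsetS (T Omega : finType) (S : nat -> Omega -> {set T}) i w :
  Uset S i.+1 w = Uset S i w :|: S i w.
Proof. by rewrite /Uset big_ord_recr. Qed.

Lemma Uset_mono (T Omega : finType) (S : nat -> Omega -> {set T}) i j w :
  i <= j -> Uset S i w \subset Uset S j w.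
Proof.
move=> ij; apply/subsetP => x /bigcupP [l _ h]; apply/bigcupP.
by exists (widen_ord ij l).
Qed.

Lemma card_Uset (T Omega : finType) (S : nat -> Omega -> {set T}) j w :
  #|Uset S j w| <= \sum_(i < j) #|S i w|.
Proof.
elim: j => [|j IH]; first by rewrite Uset0 cards0.
rewrite UsetS big_ord_recr /= cardsU; apply: leq_trans (leq_subr _ _) _.
by rewrite leq_add2r.
Qed.

Lemma abel (R : realFieldType) (n : nat) (a b : nat -> nat) (m : nat -> R) :
  (forall i, m i.+1 <= m i)%R -> (0 <= m n)%R ->
  (forall j, j <= n -> \sum_(i < j) a i <= \sum_(i < j) b i) ->
  (\sum_(i < n) (a i)%:R * m i <= \sum_(i < n) (b i)%:R * m i)%R.
Proof.
move=> mdec m0 hab.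
have key : forall j, j <= n ->
  (((\sum_(i < j) b i)%:R - (\sum_(i < j) a i)%:R) * m j <=
   \sum_(i < j) ((b i)%:R - (a i)%:R) * m i)%R.
  elim => [|j IH] jn; first by rewrite !big_ord0 subrr mul0r.
  rewrite !big_ord_recr /=.
  have h1 := IH (ltnW jn).
  have h2 : (0 <= ((\sum_(i < j.+1) b i)%:R - (\sum_(i < j.+1) a i)%:R) :> R)%R.
    by rewrite subr_ge0 ler_nat hab.
  rewrite !big_ord_recr /= in h2.
  apply: (le_trans (y := (((\sum_(i < j) b i + b j)%:R - (\sum_(i < j) a i + a j)%:R) * m j)%R)).
    by apply: ler_wpM2l.
  rewrite !natrD.
  have -> : (((\sum_(i < j) b i)%:R + (b j)%:R - ((\sum_(i < j) a i)%:R + (a j)%:R)) * m j =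
     ((\sum_(i < j) b i)%:R - (\sum_(i < j) a i)%:R) * m j + ((b j)%:R - (a j)%:R) * m j :> R)%R.
    by ring.
  by apply: lerD.
have := key n (leqnn n).
have h0 : (0 <= ((\sum_(i < n) b i)%:R - (\sum_(i < n) a i)%:R) * m n :> R)%R.
  by apply: mulr_ge0 => //; rewrite subr_ge0 ler_nat hab.
move=> h; have := le_trans h0 h.
under eq_bigr do rewrite mulrBl.
by rewrite sumrB subr_ge0.
Qed.

Definition lev (T Omega : finType) (M : matroid T) (S : nat -> Omega -> {set T}) (k : nat)
  (w : Omega) (e : T) : nat :=
  find (fun j => e \in mspan M (Uset S j.+1 w)) (iota 0 k).

Definition Tpart (T Omega : finType) (M : matroid T) (S : nat -> Omega -> {set T}) (k : nat)
  (Tt : {set T}) (i : nat) (w : Omega) : {set T} :=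
  [set e in Tt | lev M S k w e == i].

Lemma lev_le (T Omega : finType) (M : matroid T) (S : nat -> Omega -> {set T}) k w e :
  lev M S k w e <= k.
Proof. by rewrite /lev; apply: leq_trans (find_size _ _) _; rewrite size_iota. Qed.

Lemma lev_notspan (T Omega : finType) (M : matroid T) (S : nat -> Omega -> {set T}) k w e Tt :
  indep M Tt -> e \in Tt -> e \notin mspan M (Uset S (lev M S k w e) w).
Proof.
move=> iT eT; case E: (lev M S k w e) => [|j].
  by rewrite Uset0; exact: indep_not_loop iT eT.
have jl : j < lev M S k w e by rewrite E.
have jk : j < k by apply: leq_trans jl (lev_le _ _ _ _ _).
have := before_find 0 jl; rewrite nth_iota // add0n => ->; done.
Qed.

Lemma lev_span (T Omega : finType) (M : matroid T) (S : nat -> Omega -> {set T}) k w e :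
  lev M S k w e < k -> e \in mspan M (Uset S (lev M S k w e).+1 w).
Proof.
move=> lk.
have hs : has (fun j => e \in mspan M (Uset S j.+1 w)) (iota 0 k).
  by rewrite has_find size_iota.
have := nth_find 0 hs; rewrite -/(lev M S k w e) nth_iota // add0n; done.
Qed.

Lemma lev_span_le (T Omega : finType) (M : matroid T) (S : nat -> Omega -> {set T}) k w e j :
  lev M S k w e < j -> j <= k -> e \in mspan M (Uset S j w).
Proof.
move=> lj jk; have lk : lev M S k w e < k by apply: leq_trans lj jk.
apply: (subsetP (mspan_mono M (Uset_mono S w lj))); exact: lev_span.
Qed.

Lemma sum_Tpart (T Omega : finType) (M : matroid T) (S : nat -> Omega -> {set T}) k Tt w j :
  \sum_(i < j) #|Tpart M S k Tt i w| = #|[set e in Tt | lev M S k w e < j]|.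
Proof.
elim: j => [|j IH].
  rewrite big_ord0; apply/esym/eqP; rewrite cards_eq0; apply/eqP/setP => e.
  by rewrite !inE ltn0 andbF.
rewrite big_ord_recr /= IH.
have -> : [set e in Tt | lev M S k w e < j.+1] =
  [set e in Tt | lev M S k w e < j] :|: Tpart M S k Tt j w.
  by apply/setP => e; rewrite !inE ltnS leq_eqVlt; case: (e \in Tt); rewrite //= orbC.
rewrite cardsU; have -> : [set e in Tt | lev M S k w e < j] :&: Tpart M S k Tt j w = set0.
  apply/setP => e; rewrite !inE; case: (e \in Tt) => //=.
  by case: ltngtP.
by rewrite cards0 subn0.
Qed.

Lemma cum_Tpart (T Omega : finType) (M : matroid T) (S : nat -> Omega -> {set T}) k Tt w j :
  indep M Tt -> j <= k -> \sum_(i < j) #|Tpart M S k Tt i w| <= \sum_(i < j) #|S i w|.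
Proof.
move=> iT jk; rewrite sum_Tpart.
apply: leq_trans (card_Uset S j w).
apply: leq_trans (mrank_le_card M _).
apply: leq_trans (count_span (Uset S j w) iT).
apply: subset_leq_card; apply/subsetP => e; rewrite !inE => /andP[-> lj] /=.
have := lev_span_le lj jk; by rewrite inE.
Qed.

Lemma Tpart_last (T Omega : finType) (M : matroid T) (S : nat -> Omega -> {set T}) k Tt w :
  indep M Tt -> Tpart M S k Tt k w = Tt :\: mspan M (Uset S k w).
Proof.
move=> iT; apply/setP => e; rewrite /Tpart in_set in_setD andbC; case eT: (e \in Tt); rewrite ?andbF ?andbT //=.
apply/idP/idP.
  by move=> /eqP E; have := lev_notspan S k w iT eT; rewrite E.
move=> ns; have := lev_le M S k w e; rewrite leq_eqVlt => /orP[//|lk].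
by move: ns; rewrite (lev_span_le lk (leqnn k)).
Qed.

Lemma Tpart_disj (T Omega : finType) (M : matroid T) (S : nat -> Omega -> {set T}) k Tt w i :
  indep M Tt -> [disjoint Tpart M S k Tt i w & mspan M (Uset S i w)].
Proof.
move=> iT; rewrite disjoints_subset; apply/subsetP => e; rewrite /Tpart in_set in_setC => /andP[eT /eqP E].
by rewrite -E; apply: lev_notspan iT eT.
Qed.

Lemma sh_refl (T Omega : finType) (I S : nat -> Omega -> {set T}) i w : same_hist I S i w w.
Proof. by apply/forallP => j; rewrite !eqxx. Qed.

Lemma sh_sym (T Omega : finType) (I S : nat -> Omega -> {set T}) i w w' :
  same_hist I S i w w' -> same_hist I S i w' w.
Proof. by move/forallP => h; apply/forallP => j; move: (h j) => /andP[/eqP -> /eqP ->]; rewrite !eqxx. Qed.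

Lemma sh_trans (T Omega : finType) (I S : nat -> Omega -> {set T}) i w1 w2 w3 :
  same_hist I S i w1 w2 -> same_hist I S i w2 w3 -> same_hist I S i w1 w3.
Proof.
move/forallP => h1 /forallP h2; apply/forallP => j.
by move: (h1 j) (h2 j) => /andP[/eqP -> /eqP ->] /andP[/eqP -> /eqP ->]; rewrite !eqxx.
Qed.

Lemma sh_Uset (T Omega : finType) (I S : nat -> Omega -> {set T}) i w w' :
  same_hist I S i w w' -> Uset S i w' = Uset S i w.
Proof.
move/forallP => h; apply: eq_bigr => j _.
by move: (h j) => /andP[_ /eqP ->].
Qed.

Lemma Exp_ext (R : realFieldType) (Omega : finType) (p : Omega -> R) (X Y : Omega -> R) :
  (forall w, X w = Y w) -> Exp p X = Exp p Y.
Proof. by move=> h; apply: eq_bigr => w _; rewrite h. Qed.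

Local Open Scope ring_scope.

Lemma key_tower (R : realFieldType) (T : finType) (M : matroid T) (f : {set T} -> R)
  (Omega : finType) (p : Omega -> R) (I S : nat -> Omega -> {set T}) (i : nat) (c : R)
  (X Y : Omega -> R) :
  (forall w, 0 <= p w) -> 0 <= c ->
  (forall w, 0 < p w ->
     condExp p (same_hist I S i w) X >= c * condExp p (same_hist I S i w) Y * maxgain M f (Uset S i w)) ->
  Exp p X >= c * Exp p (fun w => Y w * maxgain M f (Uset S i w)).
Proof.
move=> p0 c0 h.
have tw := fun Z => tower Z p0 (@sh_refl T Omega I S i) (@sh_sym T Omega I S i) (@sh_trans T Omega I S i).
rewrite /Exp -(tw X) -(tw (fun w => Y w * maxgain M f (Uset S i w))) mulr_sumr; apply: ler_sum => w _.
have E : condExp p (same_hist I S i w) (fun w0 => Y w0 * maxgain M f (Uset S i w0)) =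
  condExp p (same_hist I S i w) Y * maxgain M f (Uset S i w).
  rewrite /condExp mulrAC; congr (_ / _); rewrite mulr_suml; apply: eq_bigr => w' hw.
  by rewrite (sh_Uset hw) mulrA.
rewrite E.
have := p0 w; rewrite le0r => /orP[/eqP ->|pw]; first by rewrite !mul0r mulr0.
by rewrite mulrCA ler_pM2l // mulrA h.
Qed.

Lemma telescope_U (R : realFieldType) (T Omega : finType) (f : {set T} -> R)
  (S : nat -> Omega -> {set T}) k w :
  f set0 = 0 -> f (Uset S k w) = \sum_(i < k) marg f (Uset S i w) (S i w).
Proof.
move=> f0.
rewrite -(big_mkord xpredT (fun i => marg f (Uset S i w) (S i w))).
rewrite (telescope_sumr_eq (fun i => f (Uset S i w))) //=.
  by rewrite Uset0 f0 subr0.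
by move=> j _; rewrite /marg UsetS.
Qed.

Unset Implicit Arguments.
Theorem mainTheorem6 (R : realFieldType) (T : finType) (M : matroid T)
  (f : {set T} -> R) (eps beta : R)
  (Omega : finType) (p : Omega -> R)
  (k : nat) (I S : nat -> Omega -> {set T}) :
  normalized f -> submodular f ->
  0 < eps < 1 -> 0 <= beta ->
  is_prob p ->
  (* (a) *)
  (forall (i : nat), (i < k)%N -> forall w, 0 < p w ->
     [/\ I i w \subset S i w,
         S i w \subset ~: mspan M (Uset S i w),
         indep_contr M (Uset S i w) (I i w) &
         condExp p (same_hist I S i w) (fun w' => marg f (Uset S i w') (I i w'))
         >= (1 - eps) * condExp p (same_hist I S i w) (fun w' => (#|S i w'|)%:R)
                      * maxgain M f (Uset S i w)]) ->
  (* (b) *)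
  (forall w, 0 < p w -> forall Tt : {set T}, indep M Tt ->
     marg f (Uset S k w) (Tt :\: mspan M (Uset S k w)) <= beta) ->
  (* (i) *)
  Exp p (fun w => f (Uset I k w)) >= (1 - eps) * Exp p (fun w => f (Uset S k w))
  /\
  (* (ii) *)
  (forall Tt : {set T}, indep M Tt ->
    exists Tp : nat -> Omega -> {set T},
      [/\ (forall w w', (forall j, (j < k)%N -> S j w = S j w') ->
             forall i, Tp i w = Tp i w'),
          (forall w, Tt = \bigcup_(i < k.+1) Tp i w),
          (forall w (i j : 'I_k.+1), i != j -> [disjoint Tp i w & Tp j w]),
          (forall w (i : 'I_k.+1), [disjoint Tp i w & mspan M (Uset S i w)]) &
          Exp p (fun w => f (Uset I k w))
          >= (1 - eps) * \sum_(i < k.+1) Exp p (fun w => marg f (Uset S i w) (Tp i w))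
             - (1 - eps) * beta]).
Proof.
move=> f0 sf /andP[e0 e1] b0 pp ha hb.
have p0 : forall w, 0 <= p w by case: pp.
have c0 : 0 <= 1 - eps by rewrite subr_ge0 ltW.
pose H := fun w => \sum_(i < k) (#|S i w|)%:R * maxgain M f (Uset S i w).
have stepA : Exp p (fun w => f (Uset I k w)) >= (1 - eps) * Exp p H.
  rewrite (Exp_ext p (fun w => @telescope_U _ _ _ f I k w f0)).
  rewrite (Exp_sum p k (fun i w => marg f (Uset I i w) (I i w))) /H (Exp_sum p k (fun i w => (#|S i w|)%:R * maxgain M f (Uset S i w))).
  rewrite mulr_sumr; apply: ler_sum => i _.
  have ik : (i < k)%N := ltn_ord i.
  apply: le_trans (_ : Exp p (fun w => marg f (Uset S i w) (I i w)) <= _).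
    apply: (@key_tower _ _ M f _ p I S i (1 - eps) (fun w => marg f (Uset S i w) (I i w)) (fun w => (#|S i w|)%:R)) => // w pw; by case: (ha i ik w pw).
  apply: Exp_le => // w pw.
  have [h1 h2 _ _] := ha i ik w pw.
  apply: marg_dimin => //.
    apply/subsetP => x /bigcupP [j _ xj]; apply/bigcupP; exists j => //.
    have [h1' _ _ _] := ha j (ltn_trans (ltn_ord j) ik) w pw.
    exact: (subsetP h1').
  rewrite disjoints_subset; apply: subset_trans (subset_trans h1 h2) _.
  by rewrite setCS sub_mspan.
have stepB : Exp p (fun w => f (Uset S k w)) <= Exp p H.
  apply: Exp_le => // w pw; rewrite (@telescope_U _ _ _ f S k w f0) /H.
  apply: ler_sum => i _; apply: marg_bound => //.
  have [_ h2 _ _] := ha i (ltn_ord i) w pw.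
  by rewrite disjoints_subset.
split.
  apply: le_trans stepA; exact: ler_wpM2l.
move=> Tt iT; exists (Tpart M S k Tt); split.
- move=> w w' hS i; apply/setP => e; rewrite /Tpart !in_set /lev.
  congr (_ && (_ == _)); apply: eq_in_find => j; rewrite mem_iota add0n => /andP[_ jk] /=.
  congr (e \in mspan M _); apply: eq_bigr => l _; apply: hS.
  exact: leq_trans (ltn_ord l) jk.
- move=> w; apply/setP => e; apply/idP/bigcupP.
    move=> eT; have lk : (lev M S k w e < k.+1)%N by rewrite ltnS lev_le.
    by exists (Ordinal lk) => //; rewrite /Tpart in_set eT /= eqxx.
  by case=> i _; rewrite /Tpart in_set => /andP[].
- move=> w i j ij; rewrite -setI_eq0; apply/eqP/setP => e.
  rewrite in_set0 in_setI /Tpart !in_set; apply/negP => /andP[/andP[_ /eqP h1] /andP[_ /eqP h2]].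
  have eij : i = j by apply: ord_inj; rewrite -h1 -h2.
  by rewrite eij eqxx in ij.
- move=> w i; exact: Tpart_disj.
have hC : Exp p (fun w => \sum_(i < k.+1) marg f (Uset S i w) (Tpart M S k Tt i w))
          <= Exp p H + beta.
  rewrite -(Exp_const beta pp) -Exp_add; apply: Exp_le => // w pw.
  rewrite big_ord_recr /= Tpart_last //; apply: lerD; last exact: hb.
  apply: le_trans (_ : \sum_(i < k) (#|Tpart M S k Tt i w|)%:R * maxgain M f (Uset S i w) <= _).
    by apply: ler_sum => i _; apply: marg_bound => //; exact: Tpart_disj.
  apply: (abel (a := fun i => #|Tpart M S k Tt i w|) (b := fun i => #|S i w|)
                (m := fun i => maxgain M f (Uset S i w))).
  - by move=> i; apply: maxgain_mono => //; apply: Uset_mono.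
  - exact: maxgain_ge0.
  - by move=> j jk; apply: cum_Tpart.
rewrite -(Exp_sum p k.+1 (fun i w => marg f (Uset S i w) (Tpart M S k Tt i w))).
have := ler_wpM2l c0 hC; rewrite mulrDr => h.
apply: le_trans stepA; rewrite lerBlDr; exact: h.
Qed.
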